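(* Let $\mathcal{F}=\{S_1,\dots,S_m\}$ be a set system on a ground set $X$. Then there exist sets $C_1,\dots,C_m\in\mathcal{B}^2_2$ such that for every $I\subset[m]$ we have $\bigcap_{i\in I}S_i\neq\emptyset$ if and only if $\bigcap_{i\in I}C_i\neq\emptyset$.
   Context: For positive integers $k,d$, $\mathcal{B}^d_k$ denotes the collection of subsets of $\mathbb{R}^d$ that are solution sets of systems of polynomial inequalities (each strict or non-strict) in $d$ real variables with real polynomials of degree at most $k$. $[m]=\{1,\dots,m\}$. *)

(* Defs.v *)
From Stdlib Require Import Reals List.
Open Scope R_scope.

Record poly2_deg2 : Type := Poly2Deg2 {
  c0 : R; cx : R; cy : R; cxx : R; cxy : R; cyy : R }.

Definition eval_poly2 (p : poly2_deg2) (x y : R) : R :=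
  c0 p + cx p * x + cy p * y + cxx p * x * x + cxy p * x * y + cyy p * y * y.

(* A polynomial inequality: (p, true) means p(x,y) > 0 (strict),
   (p, false) means p(x,y) >= 0 (non-strict).  Inequalities with < or <=
   are covered by negating p. *)
Definition ineq2 := (poly2_deg2 * bool)%type.

Definition sat_ineq2 (c : ineq2) (x y : R) : Prop :=
  if snd c then 0 < eval_poly2 (fst c) x y else 0 <= eval_poly2 (fst c) x y.

Definition in_B22 (C : R -> R -> Prop) : Prop :=
  exists sys : list ineq2,
    forall x y, C x y <-> Forall (fun c => sat_ineq2 c x y) sys.

(* Main.v *)
Require Import Defs.
From Stdlib Require Import Reals List.
From Stdlib Require Import ClassicalEpsilon Arith Lia Lra Psatz.
Open Scope R_scope.

Lemma encode (m : nat) : forall (I : nat -> Prop), exists k, (k < 2^m)%nat /\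
  forall i, (i < m)%nat -> (Nat.testbit k i = true <-> I i).
Proof.
  induction m as [|m IH]; intros I.
  - exists 0%nat; split; [simpl; lia | intros; lia].
  - destruct (IH (fun j => I (S j))) as [k [Hk Hb]].
    destruct (excluded_middle_informative (I 0%nat)) as [h0|h0].
    + exists (2*k + Nat.b2n true)%nat; split.
      * rewrite Nat.pow_succ_r'. simpl Nat.b2n. lia.
      * intros [|i] Hi.
        -- rewrite Nat.testbit_0_r. tauto.
        -- rewrite Nat.testbit_succ_r. apply Hb. lia.
    + exists (2*k + Nat.b2n false)%nat; split.
      * rewrite Nat.pow_succ_r'. simpl Nat.b2n. lia.
      * intros [|i] Hi.
        -- rewrite Nat.testbit_0_r. split; [discriminate|tauto].
        -- rewrite Nat.testbit_succ_r. apply Hb. lia.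
Qed.

Lemma finite_int (n : nat) : forall x, 0 <= x -> x < INR n ->
  (forall k, (k < n)%nat -> 0 <= (x - INR k) * (x - INR k - 1)) ->
  exists k, (k < n)%nat /\ x = INR k.
Proof.
  induction n as [|n IH]; intros x H0 Hn Hk.
  - simpl in Hn; lra.
  - rewrite S_INR in Hn.
    destruct (Rlt_or_le x (INR n)) as [Hl|Hl].
    + destruct (IH x H0 Hl) as [k [Hk1 Hk2]].
      * intros k Hkn; apply Hk; lia.
      * exists k; split; [lia|exact Hk2].
    + exists n; split; [lia|].
      specialize (Hk n (Nat.lt_succ_diag_r n)). nra.
Qed.

Definition P_ge0 : ineq2 := (Poly2Deg2 0 1 0 0 0 0, false).
Definition P_ltN (N : nat) : ineq2 := (Poly2Deg2 (INR N) (-1) 0 0 0 0, true).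
Definition P_int (k : nat) : ineq2 :=
  (Poly2Deg2 (INR k * (INR k + 1)) (-(2 * INR k + 1)) 0 1 0 0, false).
Definition P_ex (g : nat -> Prop) (k : nat) : ineq2 :=
  if excluded_middle_informative (g k) then (Poly2Deg2 0 0 0 0 0 0, false)
  else (Poly2Deg2 (INR k * INR k) (-(2 * INR k)) 0 1 0 0, true).

Lemma B22_fin (N : nat) (g : nat -> Prop) :
  in_B22 (fun x y => exists k, (k < N)%nat /\ x = INR k /\ g k).
Proof.
  exists (P_ge0 :: P_ltN N :: map P_int (seq 0 N) ++ map (P_ex g) (seq 0 N)).
  intros x y. rewrite !Forall_cons_iff, Forall_app, !Forall_map, !Forall_forall.
  unfold sat_ineq2, eval_poly2, P_ge0, P_ltN, P_int, P_ex; simpl.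
  split.
  - intros [k [Hk [-> Hg]]].
    split; [pose proof (pos_INR k); lra|]. split; [apply lt_INR in Hk; lra|]. split.
    + intros j Hj. 
      destruct (Nat.le_gt_cases k j) as [h|h].
      * destruct (Nat.eq_dec k j) as [->|h'].
        -- nra.
        -- assert (INR k + 1 <= INR j) by (rewrite <- S_INR; apply le_INR; lia). nra.
      * assert (INR j + 1 <= INR k) by (rewrite <- S_INR; apply le_INR; lia). nra.
    + intros j Hj.
      destruct (excluded_middle_informative (g j)) as [h|h]; simpl; [lra|].
      assert (k <> j) by (intro; subst; tauto).
      destruct (Nat.le_gt_cases k j) as [h1|h1].
      * assert (INR k + 1 <= INR j) by (rewrite <- S_INR; apply le_INR; lia). nra.
      * assert (INR j + 1 <= INR k) by (rewrite <- S_INR; apply le_INR; lia). nra.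
  - intros [H0 [HN [Hi He]]].
    destruct (finite_int N x) as [k [Hk ->]]; [lra|lra| |].
    + intros k Hk. specialize (Hi k (proj2 (in_seq N 0 k) (conj (Nat.le_0_l k) Hk))). nra.
    + exists k; split; [exact Hk|split; [reflexivity|]].
      specialize (He k (proj2 (in_seq N 0 k) (conj (Nat.le_0_l k) Hk))).
      destruct (excluded_middle_informative (g k)) as [h|h]; [exact h|].
      simpl in He. nra.
Qed.

(* Sets S_1..S_m are indexed by 0..m-1; I ranges over nonempty subsets of [m]. *)
Theorem proposition1p7 (X : Type) (m : nat) (S : nat -> X -> Prop) :
  exists C : nat -> R -> R -> Prop,
    (forall i, (i < m)%nat -> in_B22 (C i)) /\
    (forall I : nat -> Prop,
        (forall i, I i -> (i < m)%nat) ->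
        (exists i, I i) ->
        ((exists x : X, forall i, I i -> S i x) <->
         (exists p q : R, forall i, I i -> C i p q))).
Proof.
  set (Nv := fun k => exists x : X, forall i, (i < m)%nat -> Nat.testbit k i = true -> S i x).
  exists (fun i p q => exists k, (k < 2^m)%nat /\ p = INR k /\
            (Nat.testbit k i = true /\ Nv k)).
  split.
  - intros i _. apply B22_fin.
  - intros I HI [i0 Hi0]. split.
    + intros [x Hx].
      destruct (encode m I) as [k [Hk Hb]].
      exists (INR k), 0. intros i Hi. exists k. repeat split; auto.
      * apply Hb; auto.
      * exists x. intros j Hj Hbj. apply Hx, Hb; auto.
    + intros [p [q Hpq]].
      destruct (Hpq i0 Hi0) as [k [Hk [Hp [Hb [x Hx]]]]].
      exists x. intros i Hi.
      destruct (Hpq i Hi) as [k' [_ [Hp' [Hb' _]]]].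
      assert (k' = k) by (apply INR_eq; congruence). subst k'.
      apply Hx; auto.
Qed.
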